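(* Let $a,b\in\mathbb{C}$ with $b\neq0$, and suppose $\cdot_\lambda\cdot$ is a compatible left-symmetric conformal algebraic structure on $\mathcal{W}(a,b)=\mathbb{C}[\partial]L\oplus\mathbb{C}[\partial]W$ such that $\mathbb{C}[\partial]L$ is a left-symmetric conformal subalgebra. Let $c\in\mathbb{C}$ with $L_\lambda L=(\partial+\lambda+c)L$, and write $L_\lambda W=g_1L+g_2W$, $W_\lambda L=h_1L+h_2W$, $W_\lambda W=k_1L+k_2W$ with $g_i,h_i,k_i\in\mathbb{C}[\lambda,\partial]$. Assume $c\neq0$, $g_2(\lambda,\partial)=\partial+a\lambda+b+c$ and $h_2(\lambda,\partial)=c$. Then one of the following holds: (B1) $h_1=g_1=k_1=k_2=0$ (and $g_2=\partial+a\lambda+b+c$, $h_2=c$); (B2) $a=1$, $c=b$, $g_2=\partial+\lambda+2b$, $h_2=b$, $g_1=h_1=d$, $k_1=-\frac{d^2}{b}$, $k_2=-d$, for some constant $d\in\mathbb{C}\setminus\{0\}$.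
   Context: A conformal algebra is a $\mathbb{C}[\partial]$-module $R$ with a $\mathbb{C}$-bilinear map $R\times R\to R[\lambda]$, $(x,y)\mapsto x_\lambda y$, satisfying $(\partial x)_\lambda y=-\lambda\, x_\lambda y$ and $x_\lambda(\partial y)=(\partial+\lambda)\,x_\lambda y$. For $x,y\in R$, $y_{-\lambda-\partial}x$ means: write $y_\mu x=\sum_j \mu^j z_j$ and set $y_{-\lambda-\partial}x=\sum_j(-\lambda-\partial)^j z_j$. A left-symmetric conformal algebra is a conformal algebra with $(x_\lambda y)_{\lambda+\mu}z-x_\lambda(y_\mu z)=(y_\mu x)_{\lambda+\mu}z-y_\mu(x_\lambda z)$. A compatible left-symmetric conformal algebraic structure on a Lie conformal algebra $(R,[\cdot_\lambda\cdot])$ is a left-symmetric conformal product on the same $\mathbb{C}[\partial]$-module with $x_\lambda y-y_{-\lambda-\partial}x=[x_\lambda y]$ for all $x,y$. $\mathcal{W}(a,b)$ is the free $\mathbb{C}[\partial]$-module with basis $L,W$ and Lie conformal brackets $[L_\lambda L]=(\partial+2\lambda)L$, $[L_\lambda W]=(\partial+a\lambda+b)W$, $[W_\lambda W]=0$. ''$\mathbb{C}[\partial]L$ is a left-symmetric conformal subalgebra'' means $L_\lambda L\in(\mathbb{C}[\partial]L)[\lambda]$; in that case $L_\lambda L=(\partial+\lambda+c)L$ for some $c\in\mathbb{C}$. *)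

(* Defs.v *)
From HB Require Import structures.
From mathcomp Require Import all_boot all_order all_algebra.
From mathcomp Require Import mpoly.
From mathcomp Require Import complex.
From mathcomp Require Import reals.
Set Implicit Arguments. Unset Strict Implicit. Unset Printing Implicit Defensive.
Import Order.TTheory GRing.Theory Num.Theory.
Local Open Scope ring_scope.

(* ℂ is modelled as R[i] for an arbitrary R : realType (any realType is
   isomorphic to the real numbers). *)

Section Conformal.
Variable F : comRingType.

(* Polynomials in C[λ,∂] : {mpoly F[2]} with 'X_0 = λ and 'X_1 = ∂.
   Polynomials in C[λ,μ,∂] : {mpoly F[3]} with 'X_0 = λ, 'X_1 = μ, 'X_2 = ∂. *)
Definition poly2 := {mpoly F[2]}.
Definition poly3 := {mpoly F[3]}.

(* An element p L + q W of (C[∂]L ⊕ C[∂]W)[λ,μ] is encoded by the pair (p, q). *)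
Definition elt := (poly3 * poly3)%type.

(* Structure data of a conformal product on the free C[∂]-module with basis
   e_0 = L, e_1 = W: (P i j) = (u, v) means  e_i _λ e_j = u(λ,∂) L + v(λ,∂) W. *)
Definition cdata := 'I_2 -> 'I_2 -> (poly2 * poly2)%type.

Definition comp (i : 'I_2) (x : elt) : poly3 := if val i == 0%N then x.1 else x.2.

Definition substD (t : poly3) (p : poly3) : poly3 :=
  comp_mpoly [tuple 'X_0; 'X_1; t] p.

Definition liftP (nu : poly3) (f : poly2) : poly3 :=
  comp_mpoly [tuple nu; 'X_2] f.

(* The unique C-bilinear product satisfying sesquilinearity
   (∂x)_ν y = -ν x_ν y and x_ν (∂y) = (∂+ν) x_ν y, with given values on the
   basis; coefficients of x and y that involve the other formal variables
   (λ, μ) are treated as scalars. *)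
Definition cprod (P : cdata) (nu : poly3) (x y : elt) : elt :=
  (\sum_(i < 2) \sum_(j < 2)
      substD (- nu) (comp i x) * substD ('X_2 + nu) (comp j y) * liftP nu (P i j).1,
   \sum_(i < 2) \sum_(j < 2)
      substD (- nu) (comp i x) * substD ('X_2 + nu) (comp j y) * liftP nu (P i j).2).

Definition eltB (x y : elt) : elt := (x.1 - y.1, x.2 - y.2).

Definition ofR (p q : {poly F}) : elt :=
  ((map_poly (@mpolyC 3 F) p).['X_2], (map_poly (@mpolyC 3 F) q).['X_2]).

Definition lam : poly3 := 'X_0.
Definition mu : poly3 := 'X_1.

Definition left_symmetric (P : cdata) : Prop :=
  forall x1 x2 y1 y2 z1 z2 : {poly F},
    let x := ofR x1 x2 in let y := ofR y1 y2 in let z := ofR z1 z2 in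
    eltB (cprod P (lam + mu) (cprod P lam x y) z) (cprod P lam x (cprod P mu y z))
    = eltB (cprod P (lam + mu) (cprod P mu y x) z) (cprod P mu y (cprod P lam x z)).

(* y_{-λ-∂} x : compute y_μ x and substitute μ := -λ-∂ *)
Definition substMu (p : poly3) : poly3 :=
  comp_mpoly [tuple 'X_0; - 'X_0 - 'X_2; 'X_2] p.

Definition compatible (B P : cdata) : Prop :=
  forall x1 x2 y1 y2 : {poly F},
    let x := ofR x1 x2 in let y := ofR y1 y2 in
    let yx := cprod P mu y x in
    eltB (cprod P lam x y) (substMu yx.1, substMu yx.2) = cprod B lam x y.

Definition mkdata (f1 f2 g1 g2 h1 h2 k1 k2 : poly2) : cdata :=
  fun i j => match val i, val j with
             | 0, 0 => (f1, f2)
             | 0, _ => (g1, g2)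
             | _, 0 => (h1, h2)
             | _, _ => (k1, k2)
             end%N.

(* Lie conformal algebra W(a,b):
   [L_λ L] = (∂+2λ)L, [L_λ W] = (∂+aλ+b)W, [W_λ W] = 0, and, by skew-symmetry,
   [W_λ L] = -[L_{-λ-∂} W] = -(∂ + a(-λ-∂) + b) W. *)
Definition Wab (a b : F) : cdata :=
  mkdata ('X_1 + 2%:R *: 'X_0) 0
         0 ('X_1 + a *: 'X_0 + b%:MP)
         0 (- ('X_1 + a *: (- 'X_0 - 'X_1) + b%:MP))
         0 0.

End Conformal.

(* Main.v *)
Require Import Defs.
From HB Require Import structures.
From mathcomp Require Import all_boot all_order all_algebra.
From mathcomp Require Import mpoly.
From mathcomp Require Import complex.
From mathcomp Require Import reals.
From mathcomp Require Import ring.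
Import Order.TTheory GRing.Theory Num.Theory.
Local Open Scope ring_scope.

Section Aux.
Variable F : comRingType.

Lemma comp_comp n k l (p : {mpoly F[n]}) (t : n.-tuple {mpoly F[k]})
   (s : k.-tuple {mpoly F[l]}) :
  (p \mPo t) \mPo s = p \mPo [tuple (tnth t i) \mPo s | i < n].
Proof.
rewrite [p \mPo t]comp_mpolyEX [in RHS]comp_mpolyEX raddf_sum /=.
apply: eq_bigr => m _; rewrite comp_mpolyZ !comp_mpolyX rmorph_prod /=.
congr (_ *: _); apply: eq_bigr => i _; by rewrite rmorphXn tnth_mktuple.
Qed.

Lemma comp2 k (g : {mpoly F[2]}) (t1 t2 : {mpoly F[k]}) l (s : k.-tuple {mpoly F[l]}) :
  (g \mPo [tuple t1; t2]) \mPo s = g \mPo [tuple t1 \mPo s; t2 \mPo s].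
Proof.
rewrite comp_comp; congr comp_mpoly; apply: eq_from_tnth => i.
by rewrite tnth_mktuple; case: i => [[|[|]]] //=.
Qed.

Lemma comp_mpolyM n k (p q : {mpoly F[n]}) (lq : n.-tuple {mpoly F[k]}) :
  (p * q) \mPo lq = (p \mPo lq) * (q \mPo lq).
Proof. exact: rmorphM. Qed.

Lemma cB n k (p q : {mpoly F[n]}) (lq : n.-tuple {mpoly F[k]}) :
  (p - q) \mPo lq = (p \mPo lq) - (q \mPo lq).
Proof. exact: comp_mpolyB. Qed.
Lemma cD n k (p q : {mpoly F[n]}) (lq : n.-tuple {mpoly F[k]}) :
  (p + q) \mPo lq = (p \mPo lq) + (q \mPo lq).
Proof. exact: comp_mpolyD. Qed.
Lemma cN n k (p : {mpoly F[n]}) (lq : n.-tuple {mpoly F[k]}) :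
  (- p) \mPo lq = - (p \mPo lq).
Proof. exact: comp_mpolyN. Qed.
Lemma c0 n k (lq : n.-tuple {mpoly F[k]}) : (0 : {mpoly F[n]}) \mPo lq = 0.
Proof. exact: comp_mpoly0. Qed.
Lemma cC n k c (lq : n.-tuple {mpoly F[k]}) : (c%:MP : {mpoly F[n]}) \mPo lq = c%:MP.
Proof. exact: comp_mpolyC. Qed.
Lemma cZ n k c (p : {mpoly F[n]}) (lq : n.-tuple {mpoly F[k]}) :
  (c *: p) \mPo lq = c *: (p \mPo lq).
Proof. exact: comp_mpolyZ. Qed.

Lemma X3 k (t0 t1 t2 : {mpoly F[k]}) :
  ('X_0 \mPo [tuple t0; t1; t2] = t0) * ('X_1 \mPo [tuple t0; t1; t2] = t1)
  * ('X_2 \mPo [tuple t0; t1; t2] = t2).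
Proof. by rewrite !comp_mpolyXU. Qed.

Lemma X2 k (t0 t1 : {mpoly F[k]}) :
  ('X_0 \mPo [tuple t0; t1] = t0) * ('X_1 \mPo [tuple t0; t1] = t1).
Proof. by rewrite !comp_mpolyXU. Qed.

Lemma ofR10 : ofR (1 : {poly F}) 0 = (1, 0).
Proof. rewrite /ofR. rewrite raddf0 rmorph1; congr pair; rewrite ?hornerE //=. Qed.
Lemma ofR01 : ofR (0 : {poly F}) 1 = (0, 1).
Proof. rewrite /ofR. rewrite raddf0 rmorph1; congr pair; rewrite ?hornerE //=. Qed.

Lemma big2 (V : nmodType) (f : 'I_2 -> V) : \sum_(i < 2) f i = f ord0 + f ord_max.
Proof.
rewrite big_ord_recl big_ord1.
by have -> : lift ord0 ord0 = ord_max :> 'I_2 by apply/val_inj.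
Qed.

Lemma cprodE (P : cdata F) nu (x y : elt F) :
  cprod P nu x y =
  ((substD (- nu) x.1 * substD ('X_2 + nu) y.1 * liftP nu (P ord0 ord0).1
 + substD (- nu) x.1 * substD ('X_2 + nu) y.2 * liftP nu (P ord0 ord_max).1)
 + (substD (- nu) x.2 * substD ('X_2 + nu) y.1 * liftP nu (P ord_max ord0).1
 + substD (- nu) x.2 * substD ('X_2 + nu) y.2 * liftP nu (P ord_max ord_max).1),
   (substD (- nu) x.1 * substD ('X_2 + nu) y.1 * liftP nu (P ord0 ord0).2
 + substD (- nu) x.1 * substD ('X_2 + nu) y.2 * liftP nu (P ord0 ord_max).2)
 + (substD (- nu) x.2 * substD ('X_2 + nu) y.1 * liftP nu (P ord_max ord0).2
 + substD (- nu) x.2 * substD ('X_2 + nu) y.2 * liftP nu (P ord_max ord_max).2)).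
Proof. by rewrite /cprod !big2. Qed.

Lemma substD1 t : substD t (1 : poly3 F) = 1. Proof. exact: comp_mpoly1. Qed.
Lemma substD0 t : substD t (0 : poly3 F) = 0. Proof. exact: comp_mpoly0. Qed.
Lemma substD_lift t nu (g : poly2 F) :
  substD t (liftP nu g) = g \mPo [tuple nu \mPo [tuple 'X_0; 'X_1; t]; t].
Proof. by rewrite /substD /liftP comp2 comp_mpolyXU. Qed.


Lemma cprodM (f1 f2 g1 g2 h1 h2 k1 k2 : poly2 F) nu (x1 x2 y1 y2 : poly3 F) :
  cprod (mkdata f1 f2 g1 g2 h1 h2 k1 k2) nu (x1, x2) (y1, y2) =
  ((substD (- nu) x1 * substD ('X_2 + nu) y1 * liftP nu f1
 + substD (- nu) x1 * substD ('X_2 + nu) y2 * liftP nu g1)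
 + (substD (- nu) x2 * substD ('X_2 + nu) y1 * liftP nu h1
 + substD (- nu) x2 * substD ('X_2 + nu) y2 * liftP nu k1),
   (substD (- nu) x1 * substD ('X_2 + nu) y1 * liftP nu f2
 + substD (- nu) x1 * substD ('X_2 + nu) y2 * liftP nu g2)
 + (substD (- nu) x2 * substD ('X_2 + nu) y1 * liftP nu h2
 + substD (- nu) x2 * substD ('X_2 + nu) y2 * liftP nu k2)).
Proof. by rewrite cprodE. Qed.

Lemma eltB_eq (u1 u2 v1 v2 w1 w2 z1 z2 : poly3 F) :
  eltB (u1, u2) (v1, v2) = eltB (w1, w2) (z1, z2) ->
  u1 - v1 = w1 - z1 /\ u2 - v2 = w2 - z2.
Proof. by move=> H; split; [exact: (congr1 fst H) | exact: (congr1 snd H)]. Qed.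


Lemma LS_at P (HP : left_symmetric P) x1 x2 y1 y2 z1 z2 (X Y Z : elt F) :
  ofR x1 x2 = X -> ofR y1 y2 = Y -> ofR z1 z2 = Z ->
  eltB (cprod P (lam F + mu F) (cprod P (lam F) X Y) Z) (cprod P (lam F) X (cprod P (mu F) Y Z))
    = eltB (cprod P (lam F + mu F) (cprod P (mu F) Y X) Z) (cprod P (mu F) Y (cprod P (lam F) X Z)).
Proof. by move=> <- <- <-; apply: HP. Qed.


Section Basis.
Variables (f1 f2 g1 g2 h1 h2 k1 k2 : poly2 F).
Local Notation P := (mkdata f1 f2 g1 g2 h1 h2 k1 k2).
Lemma cpLL nu : cprod P nu (1,0) (1,0) = (liftP nu f1, liftP nu f2).
Proof. by rewrite cprodM !(substD1, substD0, mul1r, mulr1, mul0r, mulr0, addr0, add0r). Qed.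
Lemma cpLW nu : cprod P nu (1,0) (0,1) = (liftP nu g1, liftP nu g2).
Proof. by rewrite cprodM !(substD1, substD0, mul1r, mulr1, mul0r, mulr0, addr0, add0r). Qed.
Lemma cpWL nu : cprod P nu (0,1) (1,0) = (liftP nu h1, liftP nu h2).
Proof. by rewrite cprodM !(substD1, substD0, mul1r, mulr1, mul0r, mulr0, addr0, add0r). Qed.
Lemma cpWW nu : cprod P nu (0,1) (0,1) = (liftP nu k1, liftP nu k2).
Proof. by rewrite cprodM !(substD1, substD0, mul1r, mulr1, mul0r, mulr0, addr0, add0r). Qed.
Lemma cpR10 nu u1 u2 : cprod P nu (u1,u2) (1,0) =
  (substD (- nu) u1 * liftP nu f1 + substD (- nu) u2 * liftP nu h1,
   substD (- nu) u1 * liftP nu f2 + substD (- nu) u2 * liftP nu h2).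
Proof. by rewrite cprodM !(substD1, substD0, mul1r, mulr1, mul0r, mulr0, addr0, add0r). Qed.
Lemma cpR01 nu u1 u2 : cprod P nu (u1,u2) (0,1) =
  (substD (- nu) u1 * liftP nu g1 + substD (- nu) u2 * liftP nu k1,
   substD (- nu) u1 * liftP nu g2 + substD (- nu) u2 * liftP nu k2).
Proof. by rewrite cprodM !(substD1, substD0, mul1r, mulr1, mul0r, mulr0, addr0, add0r). Qed.
Lemma cpL10 nu v1 v2 : cprod P nu (1,0) (v1,v2) =
  (substD ('X_2 + nu) v1 * liftP nu f1 + substD ('X_2 + nu) v2 * liftP nu g1,
   substD ('X_2 + nu) v1 * liftP nu f2 + substD ('X_2 + nu) v2 * liftP nu g2).
Proof. by rewrite cprodM !(substD1, substD0, mul1r, mulr1, mul0r, mulr0, addr0, add0r). Qed.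
Lemma cpL01 nu v1 v2 : cprod P nu (0,1) (v1,v2) =
  (substD ('X_2 + nu) v1 * liftP nu h1 + substD ('X_2 + nu) v2 * liftP nu k1,
   substD ('X_2 + nu) v1 * liftP nu h2 + substD ('X_2 + nu) v2 * liftP nu k2).
Proof. by rewrite cprodM !(substD1, substD0, mul1r, mulr1, mul0r, mulr0, addr0, add0r). Qed.
End Basis.

Lemma LS_at2 P (HP : left_symmetric P) x1 x2 y1 y2 z1 z2 (X Y Z XY YZ YX XZ : elt F) :
  ofR x1 x2 = X -> ofR y1 y2 = Y -> ofR z1 z2 = Z ->
  cprod P (lam F) X Y = XY -> cprod P (mu F) Y Z = YZ ->
  cprod P (mu F) Y X = YX -> cprod P (lam F) X Z = XZ ->
  eltB (cprod P (lam F + mu F) XY Z) (cprod P (lam F) X YZ)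
    = eltB (cprod P (lam F + mu F) YX Z) (cprod P (mu F) Y XZ).
Proof. by move=> <- <- <- <- <- <- <-; apply: HP. Qed.

Lemma CP_at B P (HP : compatible B P) x1 x2 y1 y2 (X Y XY YX : elt F) :
  ofR x1 x2 = X -> ofR y1 y2 = Y ->
  cprod P (lam F) X Y = XY -> cprod P (mu F) Y X = YX ->
  eltB XY (substMu YX.1, substMu YX.2) = cprod B (lam F) X Y.
Proof. by move=> <- <- <- <-; apply: HP. Qed.

Definition S2_def k (g : poly2 F) (t1 t2 : {mpoly F[k]}) : {mpoly F[k]} := g \mPo [tuple t1; t2].
Fact S2_key : unit. Proof. by []. Qed.
Definition S2 := locked_with S2_key S2_def.
Arguments S2 {k}.
Lemma S2E k g (t1 t2 : {mpoly F[k]}) : S2 g t1 t2 = g \mPo [tuple t1; t2].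
Proof. by rewrite /S2 unlock. Qed.

Definition T3_def k (p : poly3 F) (t0 t1 t2 : {mpoly F[k]}) : {mpoly F[k]} := p \mPo [tuple t0; t1; t2].
Fact T3_key : unit. Proof. by []. Qed.
Definition T3 := locked_with T3_key T3_def.
Arguments T3 {k}.
Lemma T3E k p (t0 t1 t2 : {mpoly F[k]}) : T3 p t0 t1 t2 = p \mPo [tuple t0; t1; t2].
Proof. by rewrite /T3 unlock. Qed.

Section T3L.
Variables (k : nat) (t0 t1 t2 : {mpoly F[k]}).
Lemma T3D p q : T3 (p + q) t0 t1 t2 = T3 p t0 t1 t2 + T3 q t0 t1 t2.
Proof. by rewrite !T3E comp_mpolyD. Qed.
Lemma T3B p q : T3 (p - q) t0 t1 t2 = T3 p t0 t1 t2 - T3 q t0 t1 t2.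
Proof. by rewrite !T3E comp_mpolyB. Qed.
Lemma T3N p : T3 (- p) t0 t1 t2 = - T3 p t0 t1 t2.
Proof. by rewrite !T3E comp_mpolyN. Qed.
Lemma T3M p q : T3 (p * q) t0 t1 t2 = T3 p t0 t1 t2 * T3 q t0 t1 t2.
Proof. by rewrite !T3E comp_mpolyM. Qed.
Lemma T3C c : T3 c%:MP t0 t1 t2 = c%:MP.
Proof. by rewrite !T3E comp_mpolyC. Qed.
Lemma T3_0 : T3 0 t0 t1 t2 = 0.
Proof. by rewrite !T3E comp_mpoly0. Qed.
Lemma T3X0 : T3 'X_0 t0 t1 t2 = t0. Proof. by rewrite T3E comp_mpolyXU. Qed.
Lemma T3X1 : T3 'X_1 t0 t1 t2 = t1. Proof. by rewrite T3E comp_mpolyXU. Qed.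
Lemma T3X2 : T3 'X_2 t0 t1 t2 = t2. Proof. by rewrite T3E comp_mpolyXU. Qed.
Lemma T3S2 g u v : T3 (S2 g u v) t0 t1 t2 = S2 g (T3 u t0 t1 t2) (T3 v t0 t1 t2).
Proof. by rewrite !T3E !S2E comp2. Qed.
End T3L.

Section S2L.
Variables (k : nat) (t0 t1 : {mpoly F[k]}).
Lemma S2D p q : S2 (p + q) t0 t1 = S2 p t0 t1 + S2 q t0 t1.
Proof. by rewrite !S2E comp_mpolyD. Qed.
Lemma S2N p : S2 (- p) t0 t1 = - S2 p t0 t1.
Proof. by rewrite !S2E comp_mpolyN. Qed.
Lemma S2M p q : S2 (p * q) t0 t1 = S2 p t0 t1 * S2 q t0 t1.
Proof. by rewrite !S2E comp_mpolyM. Qed.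
Lemma S2C c : S2 c%:MP t0 t1 = c%:MP.
Proof. by rewrite !S2E comp_mpolyC. Qed.
Lemma S2Z c p : S2 (c *: p) t0 t1 = c%:MP * S2 p t0 t1.
Proof. by rewrite !S2E comp_mpolyZ mul_mpolyC. Qed.
Lemma S2X0 : S2 'X_0 t0 t1 = t0. Proof. by rewrite S2E comp_mpolyXU. Qed.
Lemma S2X1 : S2 'X_1 t0 t1 = t1. Proof. by rewrite S2E comp_mpolyXU. Qed.
Lemma S2S2 g u v : S2 (S2 g u v) t0 t1 = S2 g (S2 u t0 t1) (S2 v t0 t1).
Proof. by rewrite !S2E comp2. Qed.
End S2L.

Lemma S2id (g : poly2 F) : S2 g 'X_0 'X_1 = g.
Proof.
rewrite S2E -[RHS](comp_mpoly_id g); congr comp_mpoly.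
by apply: eq_from_tnth => i; rewrite tnth_mktuple; case: i => [[|[|]]] //=.
Qed.

Lemma liftS nu g : liftP nu g = S2 g nu 'X_2.
Proof. by rewrite S2E. Qed.
Lemma substS t nu g : substD t (S2 g nu 'X_2) = S2 g (T3 nu 'X_0 'X_1 t) t.
Proof. by rewrite !S2E T3E /substD comp2 (X3 _ _ _ _).2. Qed.
Lemma substMuS (g : poly2 F) u v : substMu (S2 g u v) = S2 g (T3 u 'X_0 (- 'X_0 - 'X_2) 'X_2) (T3 v 'X_0 (- 'X_0 - 'X_2) 'X_2).
Proof. by rewrite /substMu !S2E !T3E comp2. Qed.

Lemma CP_at2 B P (HP : compatible B P) x1 x2 y1 y2 (X Y : elt F) u1 u2 v1 v2 w1 w2 :
  ofR x1 x2 = X -> ofR y1 y2 = Y ->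
  cprod P (lam F) X Y = (u1, u2) -> cprod P (mu F) Y X = (v1, v2) ->
  cprod B (lam F) X Y = (w1, w2) ->
  u1 - substMu v1 = w1 /\ u2 - substMu v2 = w2.
Proof.
move=> eX eY eXY eYX eB; have := HP x1 x2 y1 y2; cbv zeta; rewrite eX eY eXY eYX eB.
by move=> H; split; [exact: (congr1 fst H) | exact: (congr1 snd H)].
Qed.

Lemma S2_0 k (t0 t1 : {mpoly F[k]}) : S2 (0 : poly2 F) t0 t1 = 0.
Proof. by rewrite S2E comp_mpoly0. Qed.

Lemma S2_00 (g : poly2 F) k : S2 g (0 : {mpoly F[k]}) 0 = (g.@[fun _ => 0])%:MP.
Proof.
rewrite S2E comp_mpolyEX mevalE rmorph_sum /=.
apply: eq_bigr => m _; rewrite comp_mpolyX rmorphM /= -mul_mpolyC rmorph_prod /=.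
congr (_ * _); apply: eq_bigr => i _; rewrite rmorphXn /=.
have -> : tnth [tuple (0 : {mpoly F[k]}); 0] i = 0 by case: i => [[|[|]]] //=.
by rewrite raddf0.
Qed.

Lemma eq_fromk (V : comRingType) (k x y u v : V) : u = v -> x - y = k * (u - v) -> x = y.
Proof. by move=> -> /eqP; rewrite subrr mulr0 subr_eq0 => /eqP. Qed.

End Aux.
Arguments S2 {F k}.
Arguments T3 {F k}.
Arguments CP_at2 {F B P} HP {x1 x2 y1 y2 X Y u1 u2 v1 v2 w1 w2}.
Arguments LS_at2 {F P} HP {x1 x2 y1 y2 z1 z2 X Y Z XY YZ YX XZ}.
Arguments CP_at {F B P} HP {x1 x2 y1 y2 X Y XY YX}.
Arguments LS_at {F P} HP {x1 x2 y1 y2 z1 z2 X Y Z}.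


Section G.
Variable F : comRingType.
Variables (f1 f2 g1 g2 h1 h2 k1 k2 : poly2 F).

Local Notation x0 := ('X_0 : poly2 F).
Local Notation x1 := ('X_1 : poly2 F).

Ltac norm3 := rewrite ?(T3D, T3N, T3M, T3S2, T3X0, T3X1, T3X2, T3B, T3_0, T3C).
Ltac normz := rewrite ?(addr0, add0r, oppr0, opprK, subr0, sub0r, subrr).

Lemma CPeq a b : compatible (Wab a b) (mkdata f1 f2 g1 g2 h1 h2 k1 k2) ->
  S2 g1 x0 x1 - S2 h1 (- x0 - x1) x1 = S2 (0 : poly2 F) x0 x1.
Proof.
move=> CP.
have := CP_at2 CP (ofR10 _) (ofR01 _) (cpLW _ f1 f2 g1 g2 h1 h2 k1 k2 _) (cpWL _ f1 f2 g1 g2 h1 h2 k1 k2 _) (cpLW _ _ _ _ _ _ _ _ _ _).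
move=> [E1 _].
rewrite !liftS !substMuS /lam /mu in E1.
move: E1 => /(congr1 (fun p => T3 p ('X_0 : poly2 F) 0 'X_1)).
norm3. normz. by [].
Qed.

Lemma EQ1 : left_symmetric (mkdata f1 f2 g1 g2 h1 h2 k1 k2) ->
    S2 f1 x0 (- x0) * S2 g1 x0 x1 +
    S2 f2 x0 (- x0) * S2 k1 x0 x1 -
    (S2 g1 0 (x1 + x0) * S2 f1 x0 x1 +
     S2 g2 0 (x1 + x0) * S2 g1 x0 x1) =
    S2 f1 0 (- x0) * S2 g1 x0 x1 + S2 f2 0 (- x0) * S2 k1 x0 x1 -
    (S2 g1 x0 x1 * S2 f1 0 x1 + S2 g2 x0 x1 * S2 g1 0 x1).
Proof.
move=> LS.
have := LS_at2 LS (ofR10 _) (ofR10 _) (ofR01 _) (cpLL _ f1 f2 g1 g2 h1 h2 k1 k2 _) (cpLW _ f1 f2 g1 g2 h1 h2 k1 k2 _) (cpLL _ f1 f2 g1 g2 h1 h2 k1 k2 _) (cpLW _ f1 f2 g1 g2 h1 h2 k1 k2 _).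
rewrite !cpR01 !cpL10 => /eltB_eq[E1 _].
rewrite !liftS !substS /lam /mu in E1.
move: E1 => /(congr1 (fun p => T3 p ('X_0 : poly2 F) 0 'X_1)).
norm3. normz. by [].
Qed.

Lemma EQ2 : left_symmetric (mkdata f1 f2 g1 g2 h1 h2 k1 k2) ->
    S2 h1 0 x1 * S2 f1 (- x1) x1 + S2 h2 0 x1 * S2 h1 (- x1) x1 -
    (S2 f1 (- x1) x1 * S2 h1 0 x1 + S2 f2 (- x1) x1 * S2 k1 0 x1) =
    S2 g1 (- x1) x1 * S2 f1 (- x1) x1 +
    S2 g2 (- x1) x1 * S2 h1 (- x1) x1 -
    (S2 h1 0 0 * S2 f1 (- x1) x1 +
     S2 h2 0 0 * S2 g1 (- x1) x1).
Proof.
move=> LS.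
have := LS_at2 LS (ofR01 _) (ofR10 _) (ofR10 _) (cpWL _ f1 f2 g1 g2 h1 h2 k1 k2 _) (cpLL _ f1 f2 g1 g2 h1 h2 k1 k2 _) (cpLW _ f1 f2 g1 g2 h1 h2 k1 k2 _) (cpWL _ f1 f2 g1 g2 h1 h2 k1 k2 _).
rewrite !cpR10 !cpL01 !cpL10 => /eltB_eq[E1 _].
rewrite !liftS !substS /lam /mu in E1.
move: E1 => /(congr1 (fun p => T3 p (0 : poly2 F) (- 'X_1) 'X_1)).
norm3. normz. by [].
Qed.

Lemma EQ4 : left_symmetric (mkdata f1 f2 g1 g2 h1 h2 k1 k2) ->
   (S2 g1 0 (- x0) * S2 g1 x0 x1 + S2 g2 0 (- x0) * S2 k1 x0 x1 -
    (S2 k1 x0 x1 * S2 f1 0 x1 + S2 k2 x0 x1 * S2 g1 0 x1) =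
    S2 h1 x0 (- x0) * S2 g1 x0 x1 +
    S2 h2 x0 (- x0) * S2 k1 x0 x1 -
    (S2 g1 0 (x1 + x0) * S2 h1 x0 x1 +
     S2 g2 0 (x1 + x0) * S2 k1 x0 x1))
 /\
   (S2 g1 0 (- x0) * S2 g2 x0 x1 + S2 g2 0 (- x0) * S2 k2 x0 x1 -
    (S2 k1 x0 x1 * S2 f2 0 x1 + S2 k2 x0 x1 * S2 g2 0 x1) =
    S2 h1 x0 (- x0) * S2 g2 x0 x1 +
    S2 h2 x0 (- x0) * S2 k2 x0 x1 -
    (S2 g1 0 (x1 + x0) * S2 h2 x0 x1 +
     S2 g2 0 (x1 + x0) * S2 k2 x0 x1)).
Proof.
move=> LS.
have := LS_at2 LS (ofR10 _) (ofR01 _) (ofR01 _) (cpLW _ f1 f2 g1 g2 h1 h2 k1 k2 _) (cpWW _ f1 f2 g1 g2 h1 h2 k1 k2 _) (cpWL _ f1 f2 g1 g2 h1 h2 k1 k2 _) (cpLW _ f1 f2 g1 g2 h1 h2 k1 k2 _).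
rewrite !cpR01 !cpL10 !cpL01 => /eltB_eq[E1 E2].
rewrite !liftS !substS /lam /mu in E1 E2.
split.
  move: E1 => /(congr1 (fun p => T3 p (0 : poly2 F) 'X_0 'X_1)).
  norm3. normz. by [].
move: E2 => /(congr1 (fun p => T3 p (0 : poly2 F) 'X_0 'X_1)).
norm3. normz. by [].
Qed.
End G.


Theorem lemma3p3 (R : realType) (a b c : R[i])
    (f1 f2 g1 g2 h1 h2 k1 k2 : {mpoly R[i][2]}) :
  b != 0 ->
  left_symmetric (mkdata f1 f2 g1 g2 h1 h2 k1 k2) ->
  compatible (Wab a b) (mkdata f1 f2 g1 g2 h1 h2 k1 k2) ->
  f2 = 0 ->
  f1 = 'X_1 + 'X_0 + c%:MP ->
  c != 0 ->
  g2 = 'X_1 + a *: 'X_0 + (b + c)%:MP ->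
  h2 = c%:MP ->
  (h1 = 0 /\ g1 = 0 /\ k1 = 0 /\ k2 = 0 /\
     g2 = 'X_1 + a *: 'X_0 + (b + c)%:MP /\ h2 = c%:MP)
  \/
  (exists d : R[i], d != 0 /\ a = 1 /\ c = b /\
     g2 = 'X_1 + 'X_0 + (2%:R * b)%:MP /\ h2 = b%:MP /\
     g1 = d%:MP /\ h1 = d%:MP /\ k1 = (- (d ^+ 2 / b))%:MP /\ k2 = (- d)%:MP).
Proof.
move=> hb LS CP ef2 ef1 hc eg2 eh2.
have C := CPeq _ f1 f2 g1 g2 h1 h2 k1 k2 a b CP.
have E1 := EQ1 _ f1 f2 g1 g2 h1 h2 k1 k2 LS.
have E2 := EQ2 _ f1 f2 g1 g2 h1 h2 k1 k2 LS.
have [E4L E4W] := EQ4 _ f1 f2 g1 g2 h1 h2 k1 k2 LS.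
rewrite S2id S2_0 in C. move/eqP: C; rewrite subr_eq0 => /eqP C.
subst f1 f2 g2 h2.
rewrite ?(S2D, S2N, S2C, S2Z, S2X0, S2X1, S2M, S2_0) in E2.
have hphi : S2 g1 0 'X_1 = S2 h1 (- 'X_1) ('X_1 : {mpoly R[i][2]}).
  by rewrite {1}C S2S2 ?(S2D, S2N, S2X0, S2X1) ?(oppr0, add0r, sub0r).
have hPhi : S2 g1 0 0 = S2 h1 0 (0 : {mpoly R[i][2]}).
  by rewrite {1}C S2S2 ?(S2D, S2N, S2X0, S2X1) ?(oppr0, add0r, addr0).
have key : ((1 - a)%:MP * 'X_1 + b%:MP) * S2 g1 0 'X_1 = c%:MP * S2 g1 0 (0 : {mpoly R[i][2]}).
  rewrite hphi hPhi; apply: (eq_fromk _ (-1) _ _ _ _ E2); ring.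
have bnz : (b%:MP : {mpoly R[i][2]}) != 0 by rewrite mpolyC_eq0.
have cnz : (c%:MP : {mpoly R[i][2]}) != 0 by rewrite mpolyC_eq0.
have [hphi0 hcase] : S2 g1 0 'X_1 = S2 g1 0 (0 : {mpoly R[i][2]}) /\
    (S2 g1 0 (0 : {mpoly R[i][2]}) = 0 \/ (a = 1 /\ c = b)).
  case: (eqVneq a 1) => [ea | na].
    subst a.
    have kb : b%:MP * S2 g1 0 'X_1 = c%:MP * S2 g1 0 (0 : {mpoly R[i][2]}).
      by rewrite -key; ring.
    have k0 : S2 (b%:MP * S2 g1 0 'X_1) 0 0 = S2 (c%:MP * S2 g1 0 (0 : {mpoly R[i][2]})) (0 : {mpoly R[i][2]}) 0.
      by rewrite kb.
    rewrite !S2M !S2C !S2S2 ?S2_0 ?S2X1 in k0.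
    have : (b - c)%:MP * S2 g1 0 (0 : {mpoly R[i][2]}) = 0.
      by rewrite rmorphB mulrBl k0 subrr.
    move/eqP; rewrite mulf_eq0 mpolyC_eq0 subr_eq0 => /orP[/eqP ebc | /eqP z].
      subst c; split; last by right.
      by apply: (mulfI bnz); rewrite kb.
    split; last by left.
    rewrite z; move: kb; rewrite z mulr0 => /eqP; rewrite mulf_eq0 (negbTE bnz) /=.
    by move/eqP.
  have na' : 1 - a != 0 by rewrite subr_eq0 eq_sym.
  pose r := - b / (1 - a).
  have hr : (1 - a) * r + b = 0 by rewrite /r; field.
  have k0 : S2 (((1 - a)%:MP * 'X_1 + b%:MP) * S2 g1 0 'X_1) 0 r%:MP =
            S2 (c%:MP * S2 g1 0 (0 : {mpoly R[i][2]})) (0 : {mpoly R[i][2]}) r%:MP.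
    by rewrite key.
  rewrite !S2M S2D S2M !S2C S2X1 !S2S2 ?S2_0 ?S2X1 in k0.
  rewrite -rmorphM -rmorphD hr raddf0 mul0r in k0.
  have z : S2 g1 0 (0 : {mpoly R[i][2]}) = 0.
    by move/esym/eqP: k0; rewrite mulf_eq0 (negbTE cnz) /= => /eqP.
  split; last by left.
  rewrite z; move: key; rewrite z mulr0 => /eqP; rewrite mulf_eq0 => /orP[/eqP H|/eqP //].
  have H0 : S2 ((1 - a)%:MP * 'X_1 + b%:MP) (0 : {mpoly R[i][2]}) 0 = 0 by rewrite H S2_0.
  rewrite S2D S2M !S2C S2X1 mulr0 add0r in H0.
  by move/eqP: H0; rewrite (negbTE bnz).
pose d := g1.@[fun _ => 0].
have hd : S2 g1 0 (0 : {mpoly R[i][2]}) = d%:MP by apply: S2_00.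
clearbody d.
rewrite hd in hphi0.
have hphiS : S2 g1 0 ('X_1 + 'X_0) = (d%:MP : {mpoly R[i][2]}).
  have e : S2 (S2 g1 0 'X_1) (0 : {mpoly R[i][2]}) ('X_1 + 'X_0) = S2 (d%:MP) 0 ('X_1 + 'X_0).
    by rewrite hphi0.
  by rewrite S2S2 S2_0 S2X1 S2C in e.
rewrite ?(S2D, S2N, S2C, S2Z, S2X0, S2X1, S2M, S2_0) in E1.
rewrite !S2id hphiS hphi0 in E1.
have hb1 : b%:MP * g1 = d%:MP * ((a - 1)%:MP * 'X_0 + b%:MP).
  by apply: (eq_fromk _ (-1) _ _ _ _ E1); ring.
have hg1 : g1 = d%:MP.
  apply: (mulfI bnz); rewrite hb1; case: hcase => [z | [ea _]].
    have dz : (d%:MP : {mpoly R[i][2]}) = 0 by rewrite -hd z.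
    by rewrite dz; ring.
  by rewrite ea; ring.
have e : S2 g1 (- 'X_0 - 'X_1) 'X_1 = S2 (S2 h1 (- 'X_0 - 'X_1) 'X_1) (- 'X_0 - 'X_1) ('X_1 : {mpoly R[i][2]}).
  by rewrite {1}C.
rewrite S2S2 !S2D !S2N S2X0 S2X1 in e.
rewrite (_ : - (- 'X_0 - 'X_1) - 'X_1 = ('X_0 : {mpoly R[i][2]})) in e; last by ring.
rewrite S2id hg1 S2C in e.
subst g1 h1.
rewrite ?(S2D, S2N, S2C, S2Z, S2X0, S2X1, S2M, S2_0) in E4L.
rewrite ?(S2D, S2N, S2C, S2Z, S2X0, S2X1, S2M, S2_0) in E4W.
rewrite !S2id in E4L E4W.
have hk2 : b%:MP * k2 = - (c%:MP * d%:MP).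
  by apply: (eq_fromk _ 1 _ _ _ _ E4W); ring.
have hk1 : (2%:R * b)%:MP * k1 = d%:MP * k2 - d%:MP * d%:MP.
  by apply: (eq_fromk _ 1 _ _ _ _ E4L); ring.
rewrite ?S2C.
have two : (2%:R * b) != 0 by rewrite mulf_eq0 negb_or pnatr_eq0 hb.
have twonz : ((2%:R * b)%:MP : {mpoly R[i][2]}) != 0 by rewrite mpolyC_eq0.
case: (eqVneq d 0) => [d0 | dn].
  left; subst d.
  have k2z : k2 = 0.
    by move/eqP: hk2; rewrite raddf0 mulr0 oppr0 mulf_eq0 (negbTE bnz) /= => /eqP.
  have k1z : k1 = 0.
    by move/eqP: hk1; rewrite k2z raddf0 !mul0r subrr mulf_eq0 (negbTE twonz) /= => /eqP.
  by rewrite k1z k2z raddf0.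
right; exists d.
have [ea ecb] : a = 1 /\ c = b.
  case: hcase => [z|//].
  by move/eqP: z; rewrite !S2C mpolyC_eq0 (negbTE dn).
subst a c.
have k2e : k2 = (- d)%:MP.
  by apply: (mulfI bnz); rewrite hk2 rmorphN; ring.
have k1e : k1 = (- (d ^+ 2 / b))%:MP.
  have ee : ((2%:R * b)%:MP * (- (d ^+ 2 / b))%:MP : {mpoly R[i][2]}) = (- (2%:R * d ^+ 2))%:MP.
    by rewrite -rmorphM; congr mpolyC; field.
  by apply: (mulfI twonz); rewrite ee hk1 k2e; ring.
rewrite k1e k2e scale1r mulr_natl mulr2n.
by do !split.
Qed.
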